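(* Let $C$ be a convex set in a finite-dimensional Euclidean space $\mathcal{E}$ and let $F$ be a face of $C$. The following are equivalent: (i) $F$ is an amenable face of $C$; (ii) $C$ and $\operatorname{aff}F$ are boundedly linearly regular, i.e. for every bounded set $B$ there exists $\kappa_B>0$ such that $\operatorname{dist}(x,F)\le\kappa_B\max\{\operatorname{dist}(x,\operatorname{aff}F),\operatorname{dist}(x,C)\}$ for all $x\in B$; (iii) $C$ and $\operatorname{aff}F$ are subtransversal at every point of $F$.
   Context: A face of a convex set $C$ is a closed convex subset $F\subseteq C$ such that whenever $x,y\in C$ and $\alpha x+(1-\alpha)y\in F$ for some $\alpha\in(0,1)$, then $x,y\in F$; note $F=C\cap\operatorname{aff}F$. A face $F$ of $C$ is amenable if for every bounded set $B$ there exists $\kappa>0$ such that $\operatorname{dist}(x,F)\le\kappa\operatorname{dist}(x,C)$ for all $x\in(\operatorname{aff}F)\cap B$. Sets $C_1,C_2$ are subtransversal at $x^*\in C_1\cap C_2$ if there exist a neighbourhood $U$ of $x^*$ and $\kappa>0$ with $\operatorname{dist}(x,C_1\cap C_2)\le\kappa(\operatorname{dist}(x,C_1)+\operatorname{dist}(x,C_2))$ for all $x\in U$. *)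

(* Defs.v *)
From HB Require Import structures.
From mathcomp Require Import all_boot all_order all_algebra.
From mathcomp Require Import all_classical all_reals topology normedtype.
Set Implicit Arguments. Unset Strict Implicit. Unset Printing Implicit Defensive.
Import Order.TTheory GRing.Theory Num.Theory.
Local Open Scope ring_scope.
Local Open Scope classical_set_scope.

Section Defs.
Variables (R : realType) (n : nat).
Notation E := 'rV[R]_n.

Definition enorm (x : E) : R := Num.sqrt (\sum_(i < n) x 0 i ^+ 2).

(* distance to a set (convention: dist to the empty set is inf set0) *)
Definition dist (x : E) (A : set E) : R := inf [set enorm (x - y) | y in A].

Definition eclosed (F : set E) : Prop :=
  forall x, (forall e : R, 0 < e -> exists y, F y /\ enorm (x - y) < e) -> F x.

Definition convex_set (C : set E) : Prop :=
  forall x y a, C x -> C y -> 0 <= a -> a <= 1 -> C (a *: x + (1 - a) *: y).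

Definition aff (A : set E) : set E :=
  [set x | exists (k : nat) (l : 'I_k -> R) (p : 'I_k -> E),
      (forall i, A (p i)) /\ \sum_(i < k) l i = 1 /\ x = \sum_(i < k) l i *: p i].

Definition is_face (C F : set E) : Prop :=
  [/\ F `<=` C, eclosed F, convex_set F &
      forall x y a, C x -> C y -> 0 < a -> a < 1 ->
        F (a *: x + (1 - a) *: y) -> F x /\ F y].

Definition bounded_set (B : set E) : Prop :=
  exists M : R, forall x, B x -> enorm x <= M.

Definition amenable_face (C F : set E) : Prop :=
  forall B, bounded_set B -> exists kappa : R, 0 < kappa /\
    forall x, (aff F `&` B) x -> dist x F <= kappa * dist x C.

Definition bdd_lin_regular_face (C F : set E) : Prop :=
  forall B, bounded_set B -> exists kappa : R, 0 < kappa /\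
    forall x, B x -> dist x F <= kappa * Num.max (dist x (aff F)) (dist x C).

(* C1, C2 subtransversal at xs; "neighbourhood U of xs" unfolded to a
   Euclidean ball around xs *)
Definition subtransversal (C1 C2 : set E) (xs : E) : Prop :=
  (C1 `&` C2) xs /\
  exists delta : R, 0 < delta /\ exists kappa : R, 0 < kappa /\
    forall x, enorm (x - xs) < delta ->
      dist x (C1 `&` C2) <= kappa * (dist x C1 + dist x C2).

End Defs.

(* Main.v *)
Require Import Defs.
From HB Require Import structures.
From mathcomp Require Import all_boot all_order all_algebra.
From mathcomp Require Import all_classical all_reals topology normedtype.
From mathcomp Require Import matrix_normedtype.
From mathcomp Require Import ring lra.
Import Order.TTheory GRing.Theory Num.Theory.
Import numFieldTopology.Exports numFieldNormedType.Exports.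
Set Implicit Arguments. Unset Strict Implicit. Unset Printing Implicit Defensive.
Local Open Scope ring_scope.
Local Open Scope classical_set_scope.
Section Aux.
Variables (R : realType) (n : nat).
Notation E := 'rV[R]_n.
Implicit Types (x y u v : E).

Lemma sq_ge0 x : 0 <= \sum_(i < n) x 0 i ^+ 2.
Proof. by apply: sumr_ge0 => i _; rewrite sqr_ge0. Qed.

Lemma enorm_ge0 x : 0 <= enorm x.
Proof. exact: sqrtr_ge0. Qed.

Lemma enorm_sq x : enorm x ^+ 2 = \sum_(i < n) x 0 i ^+ 2.
Proof. exact: sqr_sqrtr (sq_ge0 x). Qed.

Lemma enormN x : enorm (- x) = enorm x.
Proof. by rewrite /enorm; congr Num.sqrt; apply: eq_bigr => i _; rewrite mxE sqrrN. Qed.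

Lemma enormB x y : enorm (x - y) = enorm (y - x).
Proof. by rewrite -enormN opprB. Qed.

Lemma enormZ (a : R) x : enorm (a *: x) = `|a| * enorm x.
Proof.
rewrite /enorm (eq_bigr (fun i => a ^+ 2 * x 0 i ^+ 2)); last first.
  by move=> i _; rewrite mxE exprMn.
by rewrite -mulr_sumr sqrtrM ?sqr_ge0 // sqrtr_sqr.
Qed.

Lemma enorm0 : enorm (0 : E) = 0.
Proof.
rewrite /enorm (eq_bigr (fun _ => 0)); last by move=> i _; rewrite mxE expr0n.
by rewrite big1 // sqrtr0.
Qed.

Lemma cauchy_schwarz u v :
  (\sum_(i < n) u 0 i * v 0 i) ^+ 2 <=
  (\sum_(i < n) u 0 i ^+ 2) * (\sum_(i < n) v 0 i ^+ 2).
Proof.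
set U := \sum_(i < n) u 0 i ^+ 2; set V := \sum_(i < n) v 0 i ^+ 2.
set B := \sum_(i < n) u 0 i * v 0 i.
have U0 : 0 <= U by exact: sq_ge0.
have V0 : 0 <= V by exact: sq_ge0.
have [Ue0|UN0] := eqVneq U 0.
  have ui0 : forall i, u 0 i = 0.
    move=> i; apply/eqP; rewrite -sqrf_eq0; apply/eqP.
    by apply: (psumr_eq0P _ Ue0) => // j _; rewrite sqr_ge0.
  rewrite /B big1 ?expr0n ?mulr_ge0 //= => i _; by rewrite ui0 mul0r.
have Up : 0 < U by rewrite lt_def UN0 U0.
have key : forall t, 0 <= t ^+ 2 * U + 2 * t * B + V.
  move=> t.
  have -> : t ^+ 2 * U + 2 * t * B + V = \sum_(i < n) (t * u 0 i + v 0 i) ^+ 2.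
    rewrite /U /B /V mulr_sumr mulr_sumr -!big_split /=.
    by apply: eq_bigr => i _; ring.
  by apply: sumr_ge0 => i _; rewrite sqr_ge0.
have := key (- B / U).
have -> : (- B / U) ^+ 2 * U + 2 * (- B / U) * B + V = V - B ^+ 2 / U.
  by field; rewrite UN0.
rewrite subr_ge0 => h.
have := ler_wpM2r U0 h; rewrite divfK // => h2.
by rewrite mulrC.
Qed.

Lemma enormD u v : enorm (u + v) <= enorm u + enorm v.
Proof.
rewrite -(@ler_pXn2r _ 2%N) // ?nnegrE ?addr_ge0 ?enorm_ge0 //.
rewrite enorm_sq sqrrD !enorm_sq.
have -> : \sum_(i < n) (u + v) 0 i ^+ 2 =
   \sum_(i < n) u 0 i ^+ 2 + 2 * \sum_(i < n) u 0 i * v 0 i + \sum_(i < n) v 0 i ^+ 2.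
  rewrite mulr_sumr -!big_split /=; apply: eq_bigr => i _; rewrite mxE; ring.
rewrite lerD2r lerD2l -[X in _ <= X]mulr_natl ler_pM2l //.
apply: le_trans (ler_norm _) _.
rewrite -sqrtr_sqr /enorm -sqrtrM ?sq_ge0 // ler_sqrt ?mulr_ge0 ?sq_ge0 //.
exact: cauchy_schwarz.
Qed.

Lemma enormB_tri x y z : enorm (x - z) <= enorm (x - y) + enorm (y - z).
Proof. by have := enormD (x - y) (y - z); rewrite addrA subrK. Qed.

Lemma coord_le_enorm x i : `|x 0 i| <= enorm x.
Proof.
rewrite -sqrtr_sqr /enorm ler_sqrt ?sq_ge0 //.
by rewrite (bigD1 i) //= lerDl sumr_ge0 // => j _; rewrite sqr_ge0.
Qed.

Lemma enorm_le_sum x : enorm x <= \sum_(i < n) `|x 0 i|.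
Proof.
rewrite -(@ler_pXn2r _ 2%N) // ?nnegrE ?enorm_ge0 ?sumr_ge0 //.
rewrite enorm_sq [X in _ <= X]expr2 mulr_suml; apply: ler_sum => i _.
rewrite -real_normK ?num_real // expr2 ler_wpM2l //.
by rewrite (bigD1 i) //= lerDl sumr_ge0.
Qed.

Lemma coord_le_mxnorm x i : `|x 0 i| <= `|x|.
Proof.
rewrite [X in _ <= X]/Num.norm /= mx_normrE; apply/bigmax_geP; right => /=.
by exists (0, i).
Qed.

Lemma mxnorm_le_enorm x : `|x| <= enorm x.
Proof.
rewrite [X in X <= _]/Num.norm /= mx_normrE; apply: bigmax_le; first exact: enorm_ge0.
by move=> [a b] _ /=; rewrite (ord1 a); exact: coord_le_enorm.
Qed.

Lemma enorm_le_mxnorm x : enorm x <= n%:R * `|x|.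
Proof.
apply: le_trans (enorm_le_sum x) _.
apply: le_trans (ler_sum _ (fun i _ => coord_le_mxnorm x i)) _.
by rewrite sumr_const card_ord mulr_natl.
Qed.

End Aux.
Section Dist.
Variables (R : realType) (n : nat).
Notation E := 'rV[R]_n.
Implicit Types (x y z : E) (A : set E).

Lemma dist_lbound x A : has_lbound [set enorm (x - y) | y in A].
Proof. by exists 0 => r [y _ <-]; exact: enorm_ge0. Qed.

Lemma dist_ge0 x A : 0 <= dist x A.
Proof.
have [[y Ay]|nA] := pselect (exists y, A y).
  apply: lb_le_inf; first by exists (enorm (x - y)), y.
  by move=> r [z _ <-]; exact: enorm_ge0.
rewrite /dist (_ : [set enorm (x - y) | y in A] = set0) ?inf0 //.
by apply/seteqP; split => // r [y Ay _]; case: nA; exists y.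
Qed.

Lemma dist_le x A y : A y -> dist x A <= enorm (x - y).
Proof. by move=> Ay; apply: (ge_inf (dist_lbound x A)); exists y. Qed.

Lemma dist_glb x A (c : R) : (exists y, A y) ->
  (forall y, A y -> c <= enorm (x - y)) -> c <= dist x A.
Proof.
move=> [y0 Ay0] h; apply: lb_le_inf; first by exists (enorm (x - y0)), y0.
by move=> r [y Ay <-]; exact: h.
Qed.

Lemma dist_approx x A (e : R) : (exists y, A y) -> 0 < e ->
  exists y, A y /\ enorm (x - y) < dist x A + e.
Proof.
move=> [y0 Ay0] e0.
have lt : inf [set enorm (x - y) | y in A] < dist x A + e by rewrite /dist ltrDl.
have [r [y Ay <-] h] := @inf_lt _ [set enorm (x - y) | y in A] (dist x A + e)
   (ex_intro _ (enorm (x - y0)) (ex_intro2 _ _ y0 Ay0 erefl)) lt.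
by exists y.
Qed.

Lemma dist_mem x A : A x -> dist x A = 0.
Proof.
move=> Ax; apply/le_anti; rewrite dist_ge0 andbT.
by have := dist_le x Ax; rewrite subrr enorm0.
Qed.

Lemma dist_lip x y A : (exists z, A z) -> dist x A <= enorm (x - y) + dist y A.
Proof.
move=> nA; rewrite -lerBlDl; apply: dist_glb => // z Az.
rewrite lerBlDl; apply: le_trans (dist_le x Az) _; exact: enormB_tri.
Qed.

Lemma dist_sub x A B : A `<=` B -> (exists z, A z) -> dist x B <= dist x A.
Proof. by move=> AB nA; apply: dist_glb => // y Ay; apply: dist_le; apply: AB. Qed.

Lemma sub_aff A : A `<=` aff A.
Proof.
move=> y Ay; exists 1%N, (fun _ => 1), (fun _ => y).
by rewrite !big_ord1 scale1r; split.
Qed.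

Lemma aff_comb2 A x p (t : R) : aff A x -> A p -> aff A ((1 - t) *: p + t *: x).
Proof.
move=> [k [l [q [Aq [sl ->]]]]] Ap.
exists k.+1, (fun i => if unlift ord0 i is Some j then t * l j else 1 - t),
             (fun i => if unlift ord0 i is Some j then q j else p).
split; first by move=> i; case: (unlift ord0 i).
rewrite !big_ord_recl /= !unlift_none.
under eq_bigr => i _ do rewrite liftK.
under [X in _ = _ + X]eq_bigr => i _ do rewrite liftK.
by rewrite -mulr_sumr sl mulr1 subrK scaler_sumr; split => //;
   congr (_ + _); apply: eq_bigr => i _; rewrite scalerA.
Qed.

Lemma convex_comb (S : set E) k (w : 'I_k -> R) (p : 'I_k -> E) :
  convex_set S -> (forall i, 0 <= w i) -> \sum_(i < k) w i = 1 ->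
  (forall i, S (p i)) -> S (\sum_(i < k) w i *: p i).
Proof.
move=> cS; elim: k w p => [|k IH] w p w0 sw Sp.
  by move: sw; rewrite big_ord0 => /eqP; rewrite eq_sym oner_eq0.
rewrite big_ord_recl /=; move: sw; rewrite big_ord_recl /= => sw.
set s := \sum_(i < k) w (lift ord0 i) in sw.
have s0 : 0 <= s by apply: sumr_ge0.
have [s00|sN0] := eqVneq s 0.
  have wi : forall i, w (lift ord0 i) = 0.
    by move=> i; apply: (psumr_eq0P _ s00).
  rewrite big1 ?addr0; last by move=> i _; rewrite wi scale0r.
  by move: sw; rewrite s00 addr0 => ->; rewrite scale1r.
have sp : 0 < s by rewrite lt_def sN0 s0.
have := IH (fun i => w (lift ord0 i) / s) (fun i => p (lift ord0 i)).
have h1 : forall i, 0 <= w (lift ord0 i) / s by move=> i; rewrite divr_ge0.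
have h2 : \sum_(i < k) w (lift ord0 i) / s = 1 by rewrite -mulr_suml divff.
move=> /(_ h1 h2 (fun i => Sp _)) Sq.
have := cS _ _ (w ord0) (Sp ord0) Sq (w0 _).
have -> : 1 - w ord0 = s by rewrite -sw addrC addKr.
rewrite scaler_sumr.
have -> : \sum_i s *: ((w (lift ord0 i) / s) *: p (lift ord0 i)) =
          \sum_i w (lift ord0 i) *: p (lift ord0 i).
  by apply: eq_bigr => i _; rewrite scalerA mulrC -mulrA mulVf // mulr1.
apply; rewrite -sw lerDl //.
Qed.

Lemma face_aff C F : is_face C F -> forall x, C x -> aff F x -> F x.
Proof.
move=> [FC _ cF fF] x Cx [k [l [p [Fp [sl xE]]]]].
pose pos i := Num.max (l i) 0; pose neg i := Num.max (- l i) 0.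
have lpn : forall i, l i = pos i - neg i.
  move=> i; rewrite /pos /neg; case: (leP (l i) 0) => h.
    rewrite (_ : Num.max (- l i) 0 = - l i) ?sub0r ?opprK //.
    by apply/max_idPl; rewrite oppr_ge0.
  rewrite (_ : Num.max (- l i) 0 = 0) ?subr0 //.
  by apply/max_idPr; rewrite oppr_le0 ltW.
have pos0 : forall i, 0 <= pos i by move=> i; rewrite le_max lexx orbT.
have neg0 : forall i, 0 <= neg i by move=> i; rewrite le_max lexx orbT.
set P := \sum_(i < k) pos i; set N := \sum_(i < k) neg i.
set SP := \sum_(i < k) pos i *: p i; set SN := \sum_(i < k) neg i *: p i.
have PN : P - N = 1.
  by rewrite -sl -sumrB; apply: eq_bigr => i _; rewrite lpn.
have xe : \sum_(i < k) l i *: p i = SP - SN.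
  by rewrite -sumrB; apply: eq_bigr => i _; rewrite lpn scalerBl.
have N0 : 0 <= N by apply: sumr_ge0.
have [N00|NN0] := eqVneq N 0.
  have ni : forall i, neg i = 0 by move=> i; apply: (psumr_eq0P _ N00).
  rewrite xE; have -> : \sum_(i < k) l i *: p i = \sum_(i < k) pos i *: p i.
    by apply: eq_bigr => i _; rewrite lpn ni subr0.
  by apply: convex_comb => //; rewrite -PN N00 subr0.
have Np : 0 < N by rewrite lt_def NN0 N0.
have PE : P = 1 + N by rewrite -PN subrK.
have Pp : 0 < P by rewrite PE; lra.
have FSP : F (P^-1 *: SP).
  rewrite /SP scaler_sumr.
  under eq_bigr => i _ do rewrite scalerA.
  apply: convex_comb => //; first by move=> i; rewrite mulr_ge0 // invr_ge0 ltW.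
  by rewrite -mulr_sumr mulVf // gt_eqF.
have FSN : F (N^-1 *: SN).
  rewrite /SN scaler_sumr.
  under eq_bigr => i _ do rewrite scalerA.
  apply: convex_comb => //; first by move=> i; rewrite mulr_ge0 // invr_ge0 ltW.
  by rewrite -mulr_sumr mulVf // gt_eqF.
have a0 : 0 < P^-1 by rewrite invr_gt0.
have a1 : P^-1 < 1 by rewrite invf_lt1 // PE; lra.
have := fF _ _ (P^-1) Cx (FC _ FSN) a0 a1.
have -> : P^-1 *: x + (1 - P^-1) *: (N^-1 *: SN) = P^-1 *: SP.
  rewrite xE xe scalerA (_ : (1 - P^-1) * N^-1 = P^-1); last first.
    by rewrite PE; field; rewrite -PE; apply/andP; split; rewrite gt_eqF.
  by rewrite scalerBr subrK.
by move=> /(_ FSP) [].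
Qed.

End Dist.
Section Topo.
Variables (R : realType) (n : nat).
Notation E := 'rV[R]_n.

Lemma dist_convex (C : set E) p x (t : R) : convex_set C -> C p -> 0 < t ->
  t <= 1 -> dist ((1 - t) *: p + t *: x) C <= t * dist x C.
Proof.
move=> cC Cp t0 t1; rewrite mulrC -ler_pdivrMr //.
apply: dist_glb; first by exists p.
move=> c Cc; rewrite ler_pdivrMr //.
have Cq := cC c p t Cc Cp (ltW t0) t1.
apply: le_trans (dist_le _ Cq) _.
have -> : (1 - t) *: p + t *: x - (t *: c + (1 - t) *: p) = t *: (x - c).
  by rewrite scalerBr [t *: c + _]addrC opprD addrACA subrr add0r.
by rewrite enormZ gtr0_norm // mulrC.
Qed.

Lemma inv_lt_aux (d i : R) : 0 < d -> 2 / d < i -> i^-1 < d / 2.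
Proof.
move=> d0 h.
have p2 : 0 < 2 / d by rewrite divr_gt0.
have ip : 0 < i by apply: lt_trans h.
by rewrite -[d / 2]invrK invf_div ltf_pV2 // ?posrE.
Qed.

Lemma nbhs_eball (x : E) (e : R) : 0 < e -> nbhs x [set y | enorm (x - y) < e].
Proof.
move=> e0.
have np : 0 < n%:R + 1 :> R by apply: ltr_wpDl; [exact: ler0n | exact: ltr01].
apply/(@nbhs_normP R _ x (fun y => enorm (x - y) < e)); exists (e / (n%:R + 1)) => /=; first by rewrite divr_gt0.
move=> y /= hy.
apply: le_lt_trans (enorm_le_mxnorm _) _.
rewrite -(ltr_pM2l np) [X in _ < X]mulrC divfK ?gt_eqF // in hy.
apply: le_lt_trans hy.
by rewrite ler_wpM2r // lerDl.
Qed.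

Lemma closed_K (F : set E) (M : R) : eclosed F ->
  closed (F `&` [set p | enorm p <= M]).
Proof.
move=> cF p clp.
have near : forall e, 0 < e -> exists y, (F y /\ enorm y <= M) /\ enorm (p - y) < e.
  move=> e e0; have [y [[Fy My] hy]] := clp _ (nbhs_eball p e0).
  by exists y.
split.
  apply: cF => e e0; have [y [[Fy _] hy]] := near e e0; by exists y.
apply/ler_addgt0Pr => e e0 /=; have [y [[_ My] hy]] := near e e0.
have := enormD y (p - y); rewrite addrC subrK => h.
by apply: le_trans h _; apply: lerD => //; exact: ltW.
Qed.

Lemma bounded_K (F : set E) (M : R) :
  [bounded x | x in (F `&` [set p | enorm p <= M])].
Proof.
exists M; split; first exact: num_real.
move=> M0 hM0 x [_ hx] /=.
by apply: le_trans (mxnorm_le_enorm x) _; apply: le_trans hx _; apply: ltW.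
Qed.

Lemma uniform_local (C F : set E) (M : R) : is_face C F ->
  (forall xs, F xs -> subtransversal C (aff F) xs) ->
  exists i : R, 0 < i /\ forall p, F p -> enorm p <= M ->
    forall z, enorm (p - z) < i^-1 -> dist z F <= i * (dist z C + dist z (aff F)).
Proof.
move=> fC sub.
have [FC cF _ _] := fC.
set K := F `&` [set p | enorm p <= M].
have cK : compact K := bounded_closed_compact (bounded_K F M) (closed_K (F:=F) (M:=M) cF).
pose P (i : R) (y : E) := forall z, enorm (y - z) < i^-1 ->
   dist z F <= i * (dist z C + dist z (aff F)).
have := (compact_near_coveringP K).1 cK R (pinfty_nbhs R) P _.
move=> /(_ _) []; last first.
  move=> M0 [_ hM0]; exists (`|M0| + 1); split.
    by apply: ltr_wpDl; [exact: normr_ge0 | exact: ltr01].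
  move=> p Fp Mp; apply: hM0; last by split.
  by apply: le_lt_trans (ler_norm M0) _; rewrite ltrDl.
move=> x [Fx _]; have [_ [d [d0 [k [k0 hk]]]]] := sub x Fx.
exists ([set y | enorm (x - y) < d / 2], [set i | Num.max (2 / d) k < i]) => /=.
  split; first by apply: nbhs_eball; rewrite divr_gt0.
  by exists (Num.max (2 / d) k); split; [exact: num_real | done].
move=> [y i] /= [hy]; rewrite gt_max => /andP [hi1 hi2] z hz.
have i0 : 0 < i by apply: lt_trans hi2.
have hzx : enorm (z - x) < d.
  apply: le_lt_trans (enormB_tri z y x) _.
  rewrite enormB (enormB y x) [d]splitr; apply: ltrD => //.
  by apply: lt_trans hz _; apply: inv_lt_aux.
apply: le_trans (@dist_sub _ _ z (C `&` aff F) F _ _) _.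
- by move=> w [Cw Aw]; apply: (face_aff fC).
- by exists x; split; [exact: FC | exact: sub_aff].
apply: le_trans (hk _ hzx) _.
by apply: ler_wpM2r; [rewrite addr_ge0 ?dist_ge0 | exact: ltW].
Qed.

End Topo.
Section Main.
Variables (R : realType) (n : nat).
Notation E := 'rV[R]_n.

Lemma dist_empty (x : E) (A : set E) : ~ (exists y, A y) -> dist x A = 0.
Proof.
move=> nA; rewrite /dist (_ : [set enorm (x - y) | y in A] = set0) ?inf0 //.
by apply/seteqP; split => // r [y Ay _]; case: nA; exists y.
Qed.

Lemma enorm_subl (x y : E) : enorm (x - y) <= enorm x + enorm y.
Proof. by have := enormD x (- y); rewrite enormN. Qed.

Lemma enorm_decomp (x y : E) : enorm y <= enorm x + enorm (x - y).
Proof. by have := enorm_subl x (x - y); rewrite opprB addrC subrK. Qed.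

Lemma vec_id1 (p x : E) (t : R) : p - ((1 - t) *: p + t *: x) = t *: (p - x).
Proof. by rewrite scalerBl scale1r scalerBr opprD opprB addrA [p + _]addrC subrK. Qed.

Lemma vec_id2 (p x : E) (t : R) : x - ((1 - t) *: p + t *: x) = (1 - t) *: (x - p).
Proof.
by rewrite [X in _ = X]scalerBr [(1 - t) *: x]scalerBl scale1r [_ *: p + _]addrC opprD addrA.
Qed.

Lemma i_to_ii (C F : set E) : convex_set C -> is_face C F ->
  amenable_face C F -> bdd_lin_regular_face C F.
Proof.
move=> cC fC am B [M hB].
have [FC _ _ _] := fC.
have [[f0 Ff0]|nF] := pselect (exists y, F y); last first.
  exists 1; split => // x Bx; rewrite dist_empty // mul1r le_max dist_ge0 //.
set M' := M + (M + enorm f0) + 1.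
have [k [k0 hk]] := am [set p | enorm p <= M'] (ex_intro _ M' (fun _ h => h)).
exists (1 + 2 * k); split; first by lra.
move=> x Bx.
set dA := dist x (aff F); set dC := dist x C; set m := Num.max dA dC.
have dA0 : 0 <= dA by exact: dist_ge0.
have dC0 : 0 <= dC by exact: dist_ge0.
have hAm : dA <= m by rewrite le_max lexx.
have hCm : dC <= m by rewrite le_max lexx orbT.
have nA : exists y, aff F y by exists f0; exact: sub_aff.
have dAb : dA <= M + enorm f0.
  apply: le_trans (dist_le x (sub_aff Ff0)) _.
  by apply: le_trans (enorm_subl x f0) _; rewrite lerD2r hB.
suff h : dist x F <= (1 + k) * dA + k * dC by nra.
apply/ler_addgt0Pr => e e0.
set eps := Num.min 1 (e / (1 + k)).
have eps0 : 0 < eps by rewrite lt_min ltr01 divr_gt0 //; lra.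
have eps1 : eps <= 1 by rewrite ge_min lexx.
have eps2 : (1 + k) * eps <= e.
  rewrite mulrC -ler_pdivlMr; last by lra.
  by rewrite ge_min lexx orbT.
have [p [Ap hp]] := dist_approx x nA eps0.
have Bp : enorm p <= M'.
  apply: le_trans (enorm_decomp x p) _; rewrite /M' -addrA lerD ?hB //.
  by apply: ltW; apply: lt_le_trans hp _; rewrite lerD.
have := hk p (conj Ap Bp).
have h1 := dist_lip x p (ex_intro _ f0 Ff0).
have h2 := dist_lip p x (ex_intro _ f0 (FC _ Ff0)).
rewrite enormB in h2.
have r0 := enorm_ge0 (x - p).
fold dC in h2; fold dA in hp.
move=> h3; nra.
Qed.

Lemma ii_to_i (C F : set E) : bdd_lin_regular_face C F -> amenable_face C F.
Proof.
move=> blr B hB; have [k [k0 hk]] := blr B hB; exists k; split => // x [Ax Bx].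
have := hk x Bx; rewrite (dist_mem Ax).
by have -> : Num.max 0 (dist x C) = dist x C by apply/max_idPr; exact: dist_ge0.
Qed.

Lemma ii_to_iii (C F : set E) : is_face C F -> bdd_lin_regular_face C F ->
  forall xs, F xs -> subtransversal C (aff F) xs.
Proof.
move=> fC blr xs Fxs; have [FC _ _ _] := fC.
split; first by split; [exact: FC | exact: sub_aff].
exists 1; split => //.
have bB : Defs.bounded_set [set x : E | enorm x <= enorm xs + 1].
  by exists (enorm xs + 1).
have [k [k0 hk]] := blr _ bB.
exists k; split => // x hx.
have Bx : enorm x <= enorm xs + 1.
  by apply: le_trans (enorm_decomp xs x) _; rewrite lerD2l enormB ltW.
apply: le_trans (@dist_sub _ _ x F (C `&` aff F) _ _) _.
- by move=> w Fw; split; [exact: FC | exact: sub_aff].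
- by exists xs.
apply: le_trans (hk x Bx) _; apply: ler_wpM2l; first exact: ltW.
by rewrite ge_max lerDr lerDl !dist_ge0.
Qed.

Lemma iii_to_i (C F : set E) : convex_set C -> is_face C F ->
  (forall xs, F xs -> subtransversal C (aff F) xs) -> amenable_face C F.
Proof.
move=> cC fC sub B [M hB].
have [FC _ _ _] := fC.
have [[f0 Ff0]|nF] := pselect (exists y, F y); last first.
  exists 1; split => // x _; rewrite dist_empty // mul1r dist_ge0 //.
set M' := M + (M + enorm f0) + 1.
have [i [i0 hi]] := uniform_local M' fC sub.
exists i; split => // x [Ax Bx].
set D := dist x F; set dC := dist x C.
have D0 : 0 <= D by exact: dist_ge0.
have dC0 : 0 <= dC by exact: dist_ge0.
have nF : exists y, F y by exists f0.
have Db : D <= M + enorm f0.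
  apply: le_trans (dist_le x Ff0) _.
  by apply: le_trans (enorm_subl x f0) _; rewrite lerD2r hB.
apply/ler_addgt0Pr => e e0.
have ipos : 0 < 2 * i * (D + 1) by rewrite mulr_gt0 ?mulr_gt0 //; lra.
set eps := Num.min 1 (e / (2 * i * (D + 1))).
have eps0 : 0 < eps by rewrite lt_min ltr01 divr_gt0.
have eps1 : eps <= 1 by rewrite ge_min lexx.
have eps2 : eps * (2 * i * (D + 1)) <= e.
  by rewrite -ler_pdivlMr // ge_min lexx orbT.
have [p [Fp hp]] := dist_approx x nF eps0.
fold D in hp.
have Mp : enorm p <= M'.
  apply: le_trans (enorm_decomp x p) _; rewrite /M' -addrA lerD ?hB //.
  by apply: ltW; apply: lt_le_trans hp _; rewrite lerD.
set r := enorm (x - p).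
have r0 : 0 <= r by exact: enorm_ge0.
have iV0 : 0 < i^-1 by rewrite invr_gt0.
have [rlt|rge] := ltP r i^-1.
  have hpx : enorm (p - x) < i^-1 by rewrite enormB.
  have := hi p Fp Mp x hpx.
  rewrite (dist_mem Ax) addr0 => h.
  have : 0 <= i * dC by rewrite mulr_ge0 // ltW.
  lra.
have rpos : 0 < r by apply: lt_le_trans rge.
set t := i^-1 / (2 * r).
have t0 : 0 < t by rewrite divr_gt0 // mulr_gt0.
have tr : t * r = i^-1 / 2 by rewrite /t; field; rewrite !gt_eqF.
have t1 : t <= 1.
  rewrite /t ler_pdivrMr ?mulr_gt0 // mul1r; lra.
have ti : t * (2 * r * i) = 1 by rewrite /t; field; rewrite !gt_eqF.
set z := (1 - t) *: p + t *: x.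
have Az : aff F z by apply: aff_comb2.
have hz : enorm (p - z) < i^-1.
  rewrite /z vec_id1 enormZ gtr0_norm // enormB -/r tr; lra.
have := hi p Fp Mp z hz; rewrite (dist_mem Az) addr0 => h1.
have h2 : dist z C <= t * dC by apply: dist_convex => //; exact: FC.
have h3 := dist_lip x z nF.
rewrite /z vec_id2 -/z enormZ ger0_norm ?subr_ge0 // -/r in h3.
have h4 : t * D <= t * (2 * r * i * eps + i * dC).
  have e1 : t * (2 * r * i * eps) = eps by rewrite mulrA ti mul1r.
  rewrite mulrDr e1.
  have t1' : 0 <= 1 - t by lra.
  have hA1 : i * dist z C <= i * (t * dC) by rewrite ler_wpM2l // ltW.
  have hB1 : (1 - t) * r <= (1 - t) * (D + eps) by rewrite ler_wpM2l // ltW.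
  have hC1 : 0 <= t * eps by rewrite mulr_ge0 // ltW.
  have : D <= (1 - t) * (D + eps) + i * (t * dC) by lra.
  move=> h; lra.
have h5 : D <= 2 * r * i * eps + i * dC by rewrite -(ler_pM2l t0).
have h6 : r <= D + 1 by apply: le_trans (ltW hp) _; lra.
have h7 : 0 <= i * eps by rewrite mulr_ge0 // ltW.
nra.
Qed.

End Main.

Theorem proposition3p2 (R : realType) (n : nat) (C F : set 'rV[R]_n) :
  convex_set C -> is_face C F ->
  (amenable_face C F <-> bdd_lin_regular_face C F) /\
  (bdd_lin_regular_face C F <->
     (forall xs, F xs -> subtransversal C (aff F) xs)).
Proof.
move=> cC fC; split; split.
- exact: i_to_ii.
- exact: ii_to_i.
- exact: ii_to_iii.
- by move=> h; apply: i_to_ii => //; apply: iii_to_i.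
Qed.
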